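(* Every lattice $L$ is embeddable as a lattice in a lattice $L'$ such that $\mathrm{id}(L')$ is embeddable as a lattice in $L'$. Likewise, every upper semilattice $S$ is embeddable as an upper semilattice in an upper semilattice $S'$ such that $\mathrm{id}(S')$ is embeddable as an upper semilattice in $S'$; and every poset $P$ is embeddable as a poset in a poset $P'$ such that $\mathrm{id}(P')$ is embeddable as a poset in $P'$.
   Context: For a poset $P$, an ideal of $P$ is an upward directed downset of $P$ (a downset $d$ satisfies $x\le y\in d\Rightarrow x\in d$; upward directed means every two elements of the set have a common upper bound in the set). $\mathrm{id}(P)$ denotes the set of all nonempty ideals of $P$, ordered by inclusion. For $L$ a lattice, $\mathrm{id}(L)$ is a lattice (meet is intersection, join is the ideal generated by the union); for $S$ an upper semilattice, $\mathrm{id}(S)$ is an upper semilattice under the same join. *)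

(* Defs.v *)
From HB Require Import structures.
From mathcomp Require Import all_boot all_order.
Set Implicit Arguments. Unset Strict Implicit. Unset Printing Implicit Defensive.
Import Order.Theory.
Local Open Scope order_scope.

Section Ideals.
Context {d : Order.disp_t} {T : porderType d}.

Definition is_downset (A : T -> Prop) : Prop :=
  forall x y : T, x <= y -> A y -> A x.

Definition is_up_directed (A : T -> Prop) : Prop :=
  forall x y : T, A x -> A y -> exists2 z, A z & (x <= z) && (y <= z).

Definition is_ideal (A : T -> Prop) : Prop :=
  [/\ exists x, A x, is_downset A & is_up_directed A].

Definition same_set (A B : T -> Prop) : Prop := forall x, A x <-> B x.

Definition subset (A B : T -> Prop) : Prop := forall x, A x -> B x.

Definition ideal_meet (A B : T -> Prop) : T -> Prop := fun x => A x /\ B x.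

Definition ideal_join (A B : T -> Prop) : T -> Prop :=
  fun x => forall C : T -> Prop, is_ideal C ->
    (forall y, A y -> C y) -> (forall y, B y -> C y) -> C x.

End Ideals.

Definition lattice_embedding {d d'} {L : latticeType d} {L' : latticeType d'}
  (f : L -> L') : Prop :=
  [/\ injective f,
      forall x y, f (x `&` y) = f x `&` f y &
      forall x y, f (x `|` y) = f x `|` f y].

Definition semilattice_embedding {d d'} {S : joinSemilatticeType d}
  {S' : joinSemilatticeType d'} (f : S -> S') : Prop :=
  injective f /\ forall x y, f (x `|` y) = f x `|` f y.

Definition poset_embedding {d d'} {P : porderType d} {P' : porderType d'}
  (f : P -> P') : Prop :=
  forall x y, (f x <= f y) = (x <= y).

(* Embeddings of id(T) into T, given as maps on subsets which must be
   well defined on ideals (respect extensional equality). *)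
Definition ideal_map_wd {d} {T : porderType d} (g : (T -> Prop) -> T) : Prop :=
  forall A B, is_ideal A -> is_ideal B -> same_set A B -> g A = g B.

Definition ideals_lattice_embedding {d} {L : latticeType d}
  (g : (L -> Prop) -> L) : Prop :=
  [/\ ideal_map_wd g,
      (forall A B, is_ideal A -> is_ideal B -> g A = g B -> same_set A B),
      (forall A B, is_ideal A -> is_ideal B ->
          g (ideal_meet A B) = g A `&` g B) &
      (forall A B, is_ideal A -> is_ideal B ->
          g (ideal_join A B) = g A `|` g B)].

Definition ideals_semilattice_embedding {d} {S : joinSemilatticeType d}
  (g : (S -> Prop) -> S) : Prop :=
  [/\ ideal_map_wd g,
      (forall A B, is_ideal A -> is_ideal B -> g A = g B -> same_set A B) &
      (forall A B, is_ideal A -> is_ideal B ->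
          g (ideal_join A B) = g A `|` g B)].

Definition ideals_poset_embedding {d} {P : porderType d}
  (g : (P -> Prop) -> P) : Prop :=
  forall A B, is_ideal A -> is_ideal B -> (g A <= g B <-> subset A B).

(* Main.v *)
Require Import Defs.
From Stdlib Require Import Lia Eqdep_dec Compare_dec Wf_nat.
From HB Require Import structures.
From mathcomp Require Import all_boot all_order.
From mathcomp Require Import boolp.
Set Implicit Arguments. Unset Strict Implicit. Unset Printing Implicit Defensive.

Record pos := Pos {
  car :> Type;
  ple : car -> car -> Prop;
  ple_refl : forall x, ple x x;
  ple_trans : forall x y z, ple x y -> ple y z -> ple x z;
  ple_anti : forall x y, ple x y -> ple y x -> x = y }.

Definition pid (P : pos) (A : P -> Prop) :=
  [/\ (exists x, A x), (forall x y, ple x y -> A y -> A x) &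
      (forall x y, A x -> A y -> exists z, [/\ A z, ple x z & ple y z])].

Definition idc (P : pos) := {A : P -> Prop | pid A}.
Definition idle (P : pos) (A B : idc P) := forall x, proj1_sig A x -> proj1_sig B x.

Lemma idc_eq P (A B : idc P) : (forall x, proj1_sig A x <-> proj1_sig B x) -> A = B.
Proof.
case: A B => [A pA] [B pB] /= H.
have e : A = B by apply: funext => x; apply: propext; exact: H.
subst B; congr exist; exact: Prop_irrelevance.
Qed.

Definition idpos (P : pos) : pos.
Proof.
refine (@Pos (idc P) (@idle P) _ _ _).
- by move=> x y.
- by move=> x y z H1 H2 a /H1/H2.
- by move=> x y H1 H2; apply: idc_eq => a; split; [apply: H1|apply: H2].
Defined.

Fixpoint lev (P0 : pos) (k : nat) : pos :=
  match k with 0 => P0 | S k => idpos (lev P0 k) end.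

Section Sig.
Variable P0 : pos.
Definition Sg := {k : nat & car (lev P0 k)}.

Definition leS (s t : Sg) : Prop :=
  match s, t with existT k x, existT k' y =>
    match lt_eq_lt_dec k k' with
    | inleft (left _) => False
    | inleft (right e) => @ple _ (eq_rect k (fun k => car (lev P0 k)) x k' e) y
    | inright _ => True
    end
  end.

Lemma leS_same k (x y : lev P0 k) : leS (existT _ k x) (existT _ k y) <-> ple x y.
Proof.
rewrite /leS; case: (lt_eq_lt_dec k k) => [[h|e]|h]; try (exfalso; lia).
by rewrite (UIP_refl_nat _ e).
Qed.

Lemma leS_lt k k' (x : lev P0 k) (y : lev P0 k') : (k' < k)%coq_nat -> leS (existT _ k x) (existT _ k' y).
Proof. by rewrite /leS; case: (lt_eq_lt_dec k k') => [[h|e]|h] //; lia. Qed.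

Lemma leS_gt k k' (x : lev P0 k) (y : lev P0 k') : (k < k')%coq_nat -> ~ leS (existT _ k x) (existT _ k' y).
Proof. by rewrite /leS; case: (lt_eq_lt_dec k k') => [[h|e]|h] //; lia. Qed.

Ltac cmp k kk := destruct (PeanoNat.Nat.lt_total k kk) as [?Hc|[?Hc|?Hc]]; [ | subst | ].

Lemma leS_refl s : leS s s.
Proof. by case: s => k x; apply/leS_same/ple_refl. Qed.

Lemma leS_trans s t u : leS s t -> leS t u -> leS s u.
Proof.
case: s t u => [k x] [k' y] [k'' z] H1 H2.
cmp k k'.
- by exfalso; move: H1; apply: leS_gt; lia.
- cmp k' k''.
  + by exfalso; move: H2; apply: leS_gt; lia.
  + move/leS_same: H1; move/leS_same: H2 => H2 H1; apply/leS_same; exact: ple_trans H1 H2.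
  + by apply: leS_lt; lia.
- cmp k' k''.
  + by exfalso; move: H2; apply: leS_gt; lia.
  + by apply: leS_lt; lia.
  + by apply: leS_lt; lia.
Qed.

Lemma leS_anti s t : leS s t -> leS t s -> s = t.
Proof.
case: s t => [k x] [k' y] H1 H2.
cmp k k'.
- by exfalso; move: H1; apply: leS_gt; lia.
- by move/leS_same: H1; move/leS_same: H2 => H2 H1; rewrite (ple_anti H1 H2).
- by exfalso; move: H2; apply: leS_gt; lia.
Qed.


Definition pidS (I : Sg -> Prop) :=
  [/\ (exists s, I s), (forall s t, leS s t -> I t -> I s) &
      (forall s t, I s -> I t -> exists u, [/\ I u, leS s u & leS t u])].

Definition upI k (A : lev P0 k -> Prop) : Sg -> Prop :=
  fun s => exists a, A a /\ leS s (existT _ k a).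

Lemma upI_pid k (A : lev P0 k -> Prop) : pid A -> pidS (upI A).
Proof.
case=> [[a Aa] dA dirA]; split.
- by exists (existT _ k a); exists a; split=> //; apply: leS_refl.
- by move=> s t st [a' [Aa' ta']]; exists a'; split=> //; exact: leS_trans st ta'.
- move=> s t [a1 [A1 s1]] [a2 [A2 t2]].
  have [c [Ac l1 l2]] := dirA _ _ A1 A2.
  exists (existT _ k c); split.
  + by exists c; split=> //; apply: leS_refl.
  + by apply: leS_trans s1 _; apply/leS_same.
  + by apply: leS_trans t2 _; apply/leS_same.
Qed.

Definition hasAt (I : Sg -> Prop) n := exists x : lev P0 n, I (existT _ n x).

Lemma min_ex (P : nat -> Prop) : (exists n, P n) -> exists n, P n /\ forall m, P m -> (n <= m)%coq_nat.
Proof.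
case=> n; elim/lt_wf_ind: n => n IH Pn.
case: (pselect (exists m, (m < n)%coq_nat /\ P m)) => [[m [mn Pm]]|N].
- exact: IH Pm.
- exists n; split=> // m Pm; case: (le_lt_dec n m) => // h; exfalso; apply: N; by exists m.
Qed.

Definition lvl (I : Sg -> Prop) : nat :=
  match pselect (exists n, hasAt I n /\ forall m, hasAt I m -> (n <= m)%coq_nat) with
  | left H => proj1_sig (cid H)
  | right _ => 0 end.

Lemma lvl_spec I : (exists s, I s) -> hasAt I (lvl I) /\ forall m, hasAt I m -> (lvl I <= m)%coq_nat.
Proof.
move=> [[n x] Ix].
have H : exists n, hasAt I n /\ forall m, hasAt I m -> (n <= m)%coq_nat.
  by apply: min_ex; exists n; exists x.
rewrite /lvl; case: pselect => // H'; by case: (cid H').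
Qed.

Definition blk (I : Sg -> Prop) : lev P0 (lvl I) -> Prop := fun x => I (existT _ (lvl I) x).
Arguments blk : clear implicits.

Lemma blk_pid I : pidS I -> pid (blk I).
Proof.
move=> [ne dI dirI]; have [[a Ia] Hm] := lvl_spec ne; split.
- by exists a.
- by move=> x y xy; rewrite /blk; apply: dI; apply/leS_same.
- move=> x y Ix Iy; have [[m z] [Iz xz yz]] := dirI _ _ Ix Iy.
  have hm : (lvl I <= m)%coq_nat by apply: Hm; exists z.
  cmp m (lvl I); first lia.
  + by exists z; split=> //; apply/leS_same.
  + by exfalso; move: xz; apply: leS_gt.
Qed.

Lemma char I : pidS I -> forall s, I s <-> upI (blk I) s.
Proof.
move=> pI; have [ne dI dirI] := pI; have [[a Ia] Hm] := lvl_spec ne.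
move=> [m x]; split.
- move=> Ix; have hm : (lvl I <= m)%coq_nat by apply: Hm; exists x.
  cmp m (lvl I); first lia.
  + by exists x; split=> //; apply: leS_refl.
  + by exists a; split=> //; apply: leS_lt.
- by move=> [b [Ib sb]]; apply: dI sb Ib.
Qed.

Lemma KL ka kb (Ja : idc (lev P0 ka)) (Jb : idc (lev P0 kb)) :
  (forall s, upI (proj1_sig Ja) s -> upI (proj1_sig Jb) s) <->
  leS (existT (fun k => car (lev P0 k)) (S ka) Ja) (existT _ (S kb) Jb).
Proof.
case: Ja Jb => [Ja pa] [Jb pb] /=.
have [[a Aa] da _] := pa; have [[b Bb] db _] := pb.
cmp ka kb.
- split=> H; exfalso.
  + have [b' [_ ab]] := H (existT _ ka a) (ex_intro _ a (conj Aa (leS_refl _))).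
    by move: ab; apply: leS_gt.
  + by move: H; apply: leS_gt; lia.
- split=> H.
  + apply/leS_same => x /= Ax.
    have [b' [Bb' xb]] := H (existT _ kb x) (ex_intro _ x (conj Ax (leS_refl _))).
    by move/leS_same: xb => xb; apply: db xb Bb'.
  + move/leS_same: H => H.
    by move=> s [a' [Aa' sa]]; exists a'; split=> //; apply: H.
- split=> H.
  + by apply: leS_lt; lia.
  + move=> s [a' [Aa' sa]]; exists b; split=> //; apply: leS_trans sa _; apply: leS_lt; lia.
Qed.

Definition gcore I (H : pidS I) : Sg :=
  existT (fun k => car (lev P0 k)) (S (lvl I)) (exist _ (blk I) (blk_pid H) : idc (lev P0 (lvl I))).

Definition gS (s0 : Sg) (I : Sg -> Prop) : Sg :=
  match pselect (pidS I) with left H => gcore H | right _ => s0 end.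

Lemma gS_def s0 I (H : pidS I) : gS s0 I = gcore H.
Proof.
rewrite /gS; case: pselect => // H'; congr gcore; exact: Prop_irrelevance.
Qed.

Lemma gS_emb s0 A B : pidS A -> pidS B ->
  (leS (gS s0 A) (gS s0 B) <-> forall s, A s -> B s).
Proof.
move=> HA HB; rewrite (gS_def s0 HA) (gS_def s0 HB) /gcore -KL /=.
split=> H s.
- by move/(char HA)/H/(char HB).
- by move/(char HA)/H/(char HB).
Qed.

Lemma gS_surj s0 k (y : idc (lev P0 k)) :
  exists C, pidS C /\ gS s0 C = existT (fun k => car (lev P0 k)) (S k) y.
Proof.
have HC := upI_pid (proj2_sig y).
exists (upI (proj1_sig y)); split=> //; rewrite (gS_def s0 HC) /gcore.
apply: leS_anti.
- by apply/KL => s /=; move/(char HC).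
- by apply/KL => s /=; move/(char HC).
Qed.

End Sig.

Definition islub (P : pos) (j : P -> P -> P) := forall x y z, ple (j x y) z <-> ple x z /\ ple y z.
Definition isglb (P : pos) (m : P -> P -> P) := forall x y z, ple z (m x y) <-> ple z x /\ ple z y.

Section IdOps.
Variable P : pos.

Lemma lub_l (j : P -> P -> P) : islub j -> forall x y, ple x (j x y).
Proof. by move=> H x y; case: (proj1 (H x y (j x y)) (ple_refl _)). Qed.
Lemma lub_r (j : P -> P -> P) : islub j -> forall x y, ple y (j x y).
Proof. by move=> H x y; case: (proj1 (H x y (j x y)) (ple_refl _)). Qed.
Lemma glb_l (m : P -> P -> P) : isglb m -> forall x y, ple (m x y) x.
Proof. by move=> H x y; case: (proj1 (H x y (m x y)) (ple_refl _)). Qed.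
Lemma glb_r (m : P -> P -> P) : isglb m -> forall x y, ple (m x y) y.
Proof. by move=> H x y; case: (proj1 (H x y (m x y)) (ple_refl _)). Qed.

Lemma idj_pid (j : P -> P -> P) (Hj : islub j) (A B : idc P) :
  pid (fun x => exists a b, [/\ proj1_sig A a, proj1_sig B b & ple x (j a b)]).
Proof.
case: A B => [A [[a Aa] dA dirA]] [B [[b Bb] dB dirB]] /=; split.
- by exists (j a b), a, b; split=> //; apply: ple_refl.
- by move=> x y xy [a1 [b1 [A1 B1 y1]]]; exists a1, b1; split=> //; apply: ple_trans xy y1.
- move=> x y [a1 [b1 [A1 B1 x1]]] [a2 [b2 [A2 B2 y2]]].
  have [a3 [A3 a13 a23]] := dirA _ _ A1 A2.
  have [b3 [B3 b13 b23]] := dirB _ _ B1 B2.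
  have H1 : forall a' b', ple a' a3 -> ple b' b3 -> ple (j a' b') (j a3 b3).
    move=> a' b' h1 h2; apply/Hj; split.
    + exact: ple_trans h1 (lub_l Hj _ _).
    + exact: ple_trans h2 (lub_r Hj _ _).
  exists (j a3 b3); split.
  + by exists a3, b3; split=> //; apply: ple_refl.
  + exact: ple_trans x1 (H1 _ _ a13 b13).
  + exact: ple_trans y2 (H1 _ _ a23 b23).
Qed.

Definition idj (j : P -> P -> P) (Hj : islub j) (A B : idc P) : idc P :=
  exist _ _ (idj_pid Hj A B).

Lemma idj_lub (j : P -> P -> P) (Hj : islub j) : islub (P := idpos P) (idj Hj).
Proof.
move=> [A [[a Aa] dA dirA]] [B [[b Bb] dB dirB]] [C [neC dC dirC]]; rewrite /= /idle /=; split.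
- move=> H; split.
  + by move=> x Ax; apply: H; exists x, b; split=> //; apply: lub_l.
  + by move=> x Bx; apply: H; exists a, x; split=> //; apply: lub_r.
- move=> [HA HB] x [a1 [b1 [A1 B1 x1]]].
  have [c [Cc ac bc]] := dirC _ _ (HA _ A1) (HB _ B1).
  by apply: dC Cc; apply: ple_trans x1 _; apply/Hj.
Qed.

Lemma idm_pid (m : P -> P -> P) (Hm : isglb m) (A B : idc P) :
  pid (fun x => proj1_sig A x /\ proj1_sig B x).
Proof.
case: A B => [A [[a Aa] dA dirA]] [B [[b Bb] dB dirB]] /=; split.
- by exists (m a b); split; [apply: dA Aa; apply: glb_l | apply: dB Bb; apply: glb_r].
- by move=> x y xy [Ay By]; split; [apply: dA Ay|apply: dB By].
- move=> x y [Ax Bx] [Ay By].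
  have [z1 [A1 x1 y1]] := dirA _ _ Ax Ay.
  have [z2 [B2 x2 y2]] := dirB _ _ Bx By.
  exists (m z1 z2); split.
  + by split; [apply: dA A1; apply: glb_l | apply: dB B2; apply: glb_r].
  + by apply/Hm.
  + by apply/Hm.
Qed.

Definition idm (m : P -> P -> P) (Hm : isglb m) (A B : idc P) : idc P :=
  exist _ _ (idm_pid Hm A B).

Lemma idm_glb (m : P -> P -> P) (Hm : isglb m) : isglb (P := idpos P) (idm Hm).
Proof.
move=> [A pA] [B pB] [C pC]; rewrite /= /idle /=; split.
- by move=> H; split=> x /H [].
- by move=> [H1 H2] x Cx; split; [apply: H1|apply: H2].
Qed.
End IdOps.

Fixpoint jat (P0 : pos) (j0 : P0 -> P0 -> P0) (H0 : islub j0) (k : nat) :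
  {j : lev P0 k -> lev P0 k -> lev P0 k | islub j} :=
  match k as k return {j : lev P0 k -> lev P0 k -> lev P0 k | islub j} with
  | 0 => exist _ j0 H0
  | S k => exist _ (idj (proj2_sig (jat H0 k))) (idj_lub (proj2_sig (jat H0 k)))
  end.

Fixpoint mat (P0 : pos) (m0 : P0 -> P0 -> P0) (H0 : isglb m0) (k : nat) :
  {m : lev P0 k -> lev P0 k -> lev P0 k | isglb m} :=
  match k as k return {m : lev P0 k -> lev P0 k -> lev P0 k | isglb m} with
  | 0 => exist _ m0 H0
  | S k => exist _ (idm (proj2_sig (mat H0 k))) (idm_glb (proj2_sig (mat H0 k)))
  end.

Section SigOps.
Variable P0 : pos.
Variable op : forall k, lev P0 k -> lev P0 k -> lev P0 k.
Local Notation F := (fun k => car (lev P0 k)).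

Definition lexJ (s t : Sg P0) : Sg P0 :=
  match s, t with existT k x, existT k' y =>
    match lt_eq_lt_dec k k' with
    | inleft (left _) => existT F k x
    | inleft (right e) => existT F k' (op (eq_rect k F x k' e) y)
    | inright _ => existT F k' y
    end
  end.

Definition lexM (s t : Sg P0) : Sg P0 :=
  match s, t with existT k x, existT k' y =>
    match lt_eq_lt_dec k k' with
    | inleft (left _) => existT F k' y
    | inleft (right e) => existT F k' (op (eq_rect k F x k' e) y)
    | inright _ => existT F k x
    end
  end.

Lemma lexJ_same k (x y : lev P0 k) : lexJ (existT F k x) (existT F k y) = existT F k (op x y).
Proof.
rewrite /lexJ; case: (lt_eq_lt_dec k k) => [[h|e]|h]; try (exfalso; lia).
by rewrite (UIP_refl_nat _ e).
Qed.
Lemma lexM_same k (x y : lev P0 k) : lexM (existT F k x) (existT F k y) = existT F k (op x y).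
Proof.
rewrite /lexM; case: (lt_eq_lt_dec k k) => [[h|e]|h]; try (exfalso; lia).
by rewrite (UIP_refl_nat _ e).
Qed.
Lemma lexJ_lt k k' (x : lev P0 k) (y : lev P0 k') : (k < k')%coq_nat ->
  lexJ (existT F k x) (existT F k' y) = existT F k x.
Proof. by rewrite /lexJ; case: (lt_eq_lt_dec k k') => [[h|e]|h] //; lia. Qed.
Lemma lexJ_gt k k' (x : lev P0 k) (y : lev P0 k') : (k' < k)%coq_nat ->
  lexJ (existT F k x) (existT F k' y) = existT F k' y.
Proof. by rewrite /lexJ; case: (lt_eq_lt_dec k k') => [[h|e]|h] //; lia. Qed.
Lemma lexM_lt k k' (x : lev P0 k) (y : lev P0 k') : (k < k')%coq_nat ->
  lexM (existT F k x) (existT F k' y) = existT F k' y.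
Proof. by rewrite /lexM; case: (lt_eq_lt_dec k k') => [[h|e]|h] //; lia. Qed.
Lemma lexM_gt k k' (x : lev P0 k) (y : lev P0 k') : (k' < k)%coq_nat ->
  lexM (existT F k x) (existT F k' y) = existT F k x.
Proof. by rewrite /lexM; case: (lt_eq_lt_dec k k') => [[h|e]|h] //; lia. Qed.

Lemma lexJ_tag s t : projT1 (lexJ s t) = projT1 s \/ projT1 (lexJ s t) = projT1 t.
Proof. by case: s t => [k x] [k' y]; rewrite /lexJ; case: lt_eq_lt_dec => [[h|e]|h]; auto. Qed.
Lemma lexM_tag s t : projT1 (lexM s t) = projT1 s \/ projT1 (lexM s t) = projT1 t.
Proof. by case: s t => [k x] [k' y]; rewrite /lexM; case: lt_eq_lt_dec => [[h|e]|h]; auto. Qed.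

Ltac cmp k kk := destruct (PeanoNat.Nat.lt_total k kk) as [?Hc|[?Hc|?Hc]]; [ | subst | ].

Lemma lexJ_lub : (forall k, islub (@op k)) -> forall s t u,
  leS (lexJ s t) u <-> leS s u /\ leS t u.
Proof.
move=> Hop [k x] [k' y] u; cmp k k'.
- rewrite lexJ_lt //; split=> [H|[]//]; split=> //.
  by apply: leS_trans H; apply: leS_lt.
- rewrite lexJ_same; case: u => m z; cmp m k'.
  + by split=> _; [split|]; apply: leS_lt.
  + by rewrite !leS_same; apply: Hop.
  + split=> [H|[H _]]; [by exfalso; move: H; apply: leS_gt; lia|by exfalso; move: H; apply: leS_gt; lia].
- rewrite lexJ_gt //; split=> [H|[]//]; split=> //.
  by apply: leS_trans H; apply: leS_lt.
Qed.

Lemma lexM_glb : (forall k, isglb (@op k)) -> forall s t u,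
  leS u (lexM s t) <-> leS u s /\ leS u t.
Proof.
move=> Hop [k x] [k' y] u; cmp k k'.
- rewrite lexM_lt //; split=> [H|[]//]; split=> //.
  by apply: leS_trans H _; apply: leS_lt.
- rewrite lexM_same; case: u => m z; cmp m k'.
  + split=> [H|[H _]]; [by exfalso; move: H; apply: leS_gt; lia|by exfalso; move: H; apply: leS_gt; lia].
  + by rewrite !leS_same; apply: Hop.
  + by split=> _; [split|]; apply: leS_lt.
- rewrite lexM_gt //; split=> [H|[]//]; split=> //.
  by apply: leS_trans H _; apply: leS_lt.
Qed.
End SigOps.

Import Order.Theory.
Local Open Scope order_scope.
Require Import Defs.

Lemma bridge d (T : porderType d) (le' : T -> T -> Prop)
  (H : forall x y, (x <= y) <-> le' x y) (I : T -> Prop) :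
  is_ideal I <-> [/\ (exists s, I s), (forall s t, le' s t -> I t -> I s) &
      (forall s t, I s -> I t -> exists u, [/\ I u, le' s u & le' t u])].
Proof.
split.
- case=> ne dI dirI; split=> //.
  + by move=> s t /H st; apply: dI.
  + move=> s t Is It; have [u Iu /andP[su tu]] := dirI _ _ Is It.
    by exists u; split=> //; apply/H.
- case=> ne dI dirI; split=> //.
  + by move=> s t /H st; apply: dI.
  + move=> s t Is It; have [u [Iu su tu]] := dirI _ _ Is It.
    by exists u => //; apply/andP; split; apply/H.
Qed.

Lemma pred_ext T (A B : T -> Prop) : (forall x, A x <-> B x) -> A = B.
Proof. by move=> H; apply: funext => x; apply: propext. Qed.

Section JoinIdeal.
Variables (d : Order.disp_t) (S : joinSemilatticeType d).

Lemma ij_facts (A B : S -> Prop) : is_ideal A -> is_ideal B ->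
  [/\ is_ideal (ideal_join A B), subset A (ideal_join A B), subset B (ideal_join A B) &
      forall C, is_ideal C -> subset A C -> subset B C -> subset (ideal_join A B) C].
Proof.
move=> [[a Aa] dA dirA] [[b Bb] dB dirB].
pose K := fun x : S => exists a b, [/\ A a, B b & x <= a `|` b].
have KI : is_ideal K.
  split.
  - by exists (a `|` b), a, b.
  - by move=> x y xy [a1 [b1 [A1 B1 y1]]]; exists a1, b1; split=> //; apply: le_trans xy y1.
  - move=> x y [a1 [b1 [A1 B1 x1]]] [a2 [b2 [A2 B2 y2]]].
    have [a3 A3 /andP[a13 a23]] := dirA _ _ A1 A2.
    have [b3 B3 /andP[b13 b23]] := dirB _ _ B1 B2.
    exists (a3 `|` b3); first by exists a3, b3.
    apply/andP; split.
    + by apply: le_trans x1 _; rewrite leUx (le_trans a13 (leUl _ _)) (le_trans b13 (leUr _ _)).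
    + by apply: le_trans y2 _; rewrite leUx (le_trans a23 (leUl _ _)) (le_trans b23 (leUr _ _)).
have E : ideal_join A B = K.
  apply: pred_ext => x; split.
  - move=> H; apply: H => //.
    + by move=> y Ay; exists y, b; split=> //; apply: leUl.
    + by move=> y By; exists a, y; split=> //; apply: leUr.
  - move=> [a1 [b1 [A1 B1 x1]]] C [neC dC dirC] HAC HBC.
    have [c Cc /andP[ac bc]] := dirC _ _ (HAC _ A1) (HBC _ B1).
    by apply: dC Cc; apply: le_trans x1 _; rewrite leUx ac bc.
split.
- by rewrite E.
- by move=> y Ay C _ HAC _; apply: HAC.
- by move=> y By C _ _ HBC; apply: HBC.
- by move=> C CI HAC HBC x H; apply: H.
Qed.

Lemma final_sl (g : (S -> Prop) -> S) :
  (forall A B, is_ideal A -> is_ideal B -> (g A <= g B <-> subset A B)) ->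
  (forall A B, is_ideal A -> is_ideal B -> exists C, is_ideal C /\ g C = g A `|` g B) ->
  ideals_semilattice_embedding g.
Proof.
move=> Hemb Himg; split.
- by move=> A B _ _ /pred_ext ->.
- move=> A B IA IB e x; split.
  + by have := proj1 (Hemb _ _ IA IB); rewrite e => /(_ (le_refl _)); apply.
  + by have := proj1 (Hemb _ _ IB IA); rewrite e => /(_ (le_refl _)); apply.
- move=> A B IA IB.
  have [KI AK BK Kmin] := ij_facts IA IB.
  have [C [IC eC]] := Himg _ _ IA IB.
  rewrite -eC; apply: le_anti; apply/andP; split.
  + apply/(Hemb _ _ KI IC); apply: Kmin => //.
    * by apply/(Hemb _ _ IA IC); rewrite eC leUl.
    * by apply/(Hemb _ _ IB IC); rewrite eC leUr.
  + rewrite eC leUx; apply/andP; split.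
    * by apply/(Hemb _ _ IA KI).
    * by apply/(Hemb _ _ IB KI).
Qed.
End JoinIdeal.

Section LatIdeal.
Variables (d : Order.disp_t) (L : latticeType d).

Lemma im_facts (A B : L -> Prop) : is_ideal A -> is_ideal B -> is_ideal (ideal_meet A B).
Proof.
move=> [[a Aa] dA dirA] [[b Bb] dB dirB]; split.
- by exists (a `&` b); split; [apply: dA Aa; apply: leIl|apply: dB Bb; apply: leIr].
- by move=> x y xy [Ay By]; split; [apply: dA Ay|apply: dB By].
- move=> x y [Ax Bx] [Ay By].
  have [z1 A1 /andP[x1 y1]] := dirA _ _ Ax Ay.
  have [z2 B2 /andP[x2 y2]] := dirB _ _ Bx By.
  exists (z1 `&` z2).
  + by split; [apply: dA A1; apply: leIl | apply: dB B2; apply: leIr].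
  + by rewrite !lexI x1 x2 y1 y2.
Qed.

Lemma final_lat (g : (L -> Prop) -> L) :
  (forall A B, is_ideal A -> is_ideal B -> (g A <= g B <-> subset A B)) ->
  (forall A B, is_ideal A -> is_ideal B -> exists C, is_ideal C /\ g C = g A `|` g B) ->
  (forall A B, is_ideal A -> is_ideal B -> exists C, is_ideal C /\ g C = g A `&` g B) ->
  ideals_lattice_embedding g.
Proof.
move=> Hemb Hj Hm; have [H1 H2 H3] := final_sl Hemb Hj; split=> //.
move=> A B IA IB.
have IM := im_facts IA IB.
have [C [IC eC]] := Hm _ _ IA IB.
rewrite -eC; apply: le_anti; apply/andP; split.
- rewrite eC lexI; apply/andP; split.
  + by apply/(Hemb _ _ IM IA) => x [].
  + by apply/(Hemb _ _ IM IB) => x [].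
- apply/(Hemb _ _ IC IM) => x Cx; split.
  + by move: x Cx; apply/(Hemb _ _ IC IA); rewrite eC leIl.
  + by move: x Cx; apply/(Hemb _ _ IC IB); rewrite eC leIr.
Qed.
End LatIdeal.

Definition leb (P0 : pos) (s t : Sg P0) : bool := `[< leS s t >].

Lemma leb_refl P0 : reflexive (@leb P0).
Proof. by move=> s; apply/asboolP; apply: leS_refl. Qed.
Lemma leb_anti P0 : antisymmetric (@leb P0).
Proof. by move=> s t /andP[/asboolP h1 /asboolP h2]; apply: leS_anti. Qed.
Lemma leb_trans P0 : transitive (@leb P0).
Proof. by move=> t s u /asboolP h1 /asboolP h2; apply/asboolP; apply: leS_trans h1 h2. Qed.

Definition SigP (P0 : pos) := Sg P0.
HB.instance Definition _ P0 := gen_eqMixin (SigP P0).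
HB.instance Definition _ P0 := gen_choiceMixin (SigP P0).
HB.instance Definition _ P0 := Order.Le_isPOrder.Build (Order.Disp tt tt) (SigP P0)
  (@leb_refl P0) (@leb_anti P0) (@leb_trans P0).

Definition SigJ (P0 : pos) (j0 : P0 -> P0 -> P0) (H0 : islub j0) := Sg P0.
HB.instance Definition _ P0 j0 H0 := gen_eqMixin (@SigJ P0 j0 H0).
HB.instance Definition _ P0 j0 H0 := gen_choiceMixin (@SigJ P0 j0 H0).
HB.instance Definition _ P0 j0 H0 := Order.Le_isPOrder.Build (Order.Disp tt tt) (@SigJ P0 j0 H0)
  (@leb_refl P0) (@leb_anti P0) (@leb_trans P0).

Lemma SigJ_leUx P0 j0 (H0 : islub j0) (x y z : @SigJ P0 j0 H0) :
  ((lexJ (fun k => proj1_sig (jat H0 k)) x y : @SigJ P0 j0 H0) <= z) = (x <= z) && (y <= z).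
Proof.
apply/asboolP/andP.
- by move/(lexJ_lub (fun k => proj2_sig (jat H0 k))) => [h1 h2]; split; apply/asboolP.
- by move=> [/asboolP h1 /asboolP h2]; apply/(lexJ_lub (fun k => proj2_sig (jat H0 k))).
Qed.

HB.instance Definition _ P0 j0 H0 := Order.POrder_isJoinSemilattice.Build (Order.Disp tt tt)
  (@SigJ P0 j0 H0) (@SigJ_leUx P0 j0 H0).

Definition SigL (P0 : pos) (j0 : P0 -> P0 -> P0) (H0 : islub j0)
  (m0 : P0 -> P0 -> P0) (G0 : isglb m0) := Sg P0.
HB.instance Definition _ P0 j0 H0 m0 G0 := gen_eqMixin (@SigL P0 j0 H0 m0 G0).
HB.instance Definition _ P0 j0 H0 m0 G0 := gen_choiceMixin (@SigL P0 j0 H0 m0 G0).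
HB.instance Definition _ P0 j0 H0 m0 G0 := Order.Le_isPOrder.Build (Order.Disp tt tt)
  (@SigL P0 j0 H0 m0 G0) (@leb_refl P0) (@leb_anti P0) (@leb_trans P0).

Lemma SigL_leUx P0 j0 (H0 : islub j0) m0 (G0 : isglb m0) (x y z : @SigL P0 j0 H0 m0 G0) :
  ((lexJ (fun k => proj1_sig (jat H0 k)) x y : @SigL P0 j0 H0 m0 G0) <= z) = (x <= z) && (y <= z).
Proof.
apply/asboolP/andP.
- by move/(lexJ_lub (fun k => proj2_sig (jat H0 k))) => [h1 h2]; split; apply/asboolP.
- by move=> [/asboolP h1 /asboolP h2]; apply/(lexJ_lub (fun k => proj2_sig (jat H0 k))).
Qed.
Lemma SigL_lexI P0 j0 (H0 : islub j0) m0 (G0 : isglb m0) (x y z : @SigL P0 j0 H0 m0 G0) :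
  (x <= (lexM (fun k => proj1_sig (mat G0 k)) y z : @SigL P0 j0 H0 m0 G0)) = (x <= y) && (x <= z).
Proof.
apply/asboolP/andP.
- by move/(lexM_glb (fun k => proj2_sig (mat G0 k))) => [h1 h2]; split; apply/asboolP.
- by move=> [/asboolP h1 /asboolP h2]; apply/(lexM_glb (fun k => proj2_sig (mat G0 k))).
Qed.

HB.instance Definition _ P0 j0 H0 m0 G0 := Order.POrder_isJoinSemilattice.Build (Order.Disp tt tt)
  (@SigL P0 j0 H0 m0 G0) (@SigL_leUx P0 j0 H0 m0 G0).
HB.instance Definition _ P0 j0 H0 m0 G0 := Order.POrder_isMeetSemilattice.Build (Order.Disp tt tt)
  (@SigL P0 j0 H0 m0 G0) (@SigL_lexI P0 j0 H0 m0 G0).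


Lemma img_op P0 (s0 : Sg P0) (op2 : Sg P0 -> Sg P0 -> Sg P0)
  (Htag : forall s t, projT1 (op2 s t) = projT1 s \/ projT1 (op2 s t) = projT1 t)
  A B : pidS A -> pidS B -> exists C, pidS C /\ gS s0 C = op2 (gS s0 A) (gS s0 B).
Proof.
move=> HA HB.
have [k tk] : exists k, projT1 (op2 (gS s0 A) (gS s0 B)) = S k.
  case: (Htag (gS s0 A) (gS s0 B)) => ->.
  - by exists (lvl A); rewrite (gS_def s0 HA).
  - by exists (lvl B); rewrite (gS_def s0 HB).
move: tk; case: (op2 _ _) => m y /= tk; subst m.
exact: gS_surj.
Qed.

Lemma leEP P0 (x y : SigP P0) : (x <= y) <-> leS x y.
Proof. by split=> [/asboolP|?] //; apply/asboolP. Qed.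
Lemma leEJ P0 j0 H0 (x y : @SigJ P0 j0 H0) : (x <= y) <-> leS x y.
Proof. by split=> [/asboolP|?] //; apply/asboolP. Qed.
Lemma leEL P0 j0 H0 m0 G0 (x y : @SigL P0 j0 H0 m0 G0) : (x <= y) <-> leS x y.
Proof. by split=> [/asboolP|?] //; apply/asboolP. Qed.

Lemma construct_pos (P0 : pos) (x0 : P0) :
  exists g : (SigP P0 -> Prop) -> SigP P0, ideals_poset_embedding g.
Proof.
exists (gS (existT _ 0 x0)) => A B IA IB.
have pA : pidS A := proj1 (bridge (@leEP P0) A) IA.
have pB : pidS B := proj1 (bridge (@leEP P0) B) IB.
rewrite leEP; exact: gS_emb.
Qed.

Lemma construct_sl (P0 : pos) (j0 : P0 -> P0 -> P0) (H0 : islub j0) (x0 : P0) :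
  exists g : (SigJ H0 -> Prop) -> SigJ H0, ideals_semilattice_embedding g.
Proof.
exists (gS (existT _ 0 x0)); apply: final_sl.
- move=> A B IA IB.
  have pA : pidS A := proj1 (bridge (@leEJ P0 j0 H0) A) IA.
  have pB : pidS B := proj1 (bridge (@leEJ P0 j0 H0) B) IB.
  rewrite leEJ; exact: gS_emb.
- move=> A B IA IB.
  have pA : pidS A := proj1 (bridge (@leEJ P0 j0 H0) A) IA.
  have pB : pidS B := proj1 (bridge (@leEJ P0 j0 H0) B) IB.
  have [C [pC eC]] := img_op (existT _ 0 x0) (@lexJ_tag P0 (fun k => proj1_sig (jat H0 k))) pA pB.
  exists C; split=> //; exact: (proj2 (bridge (@leEJ P0 j0 H0) C) pC).
Qed.

Lemma construct_lat (P0 : pos) (j0 : P0 -> P0 -> P0) (H0 : islub j0) (m0 : P0 -> P0 -> P0) (G0 : isglb m0) (x0 : P0) :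
  exists g : (SigL H0 G0 -> Prop) -> SigL H0 G0, ideals_lattice_embedding g.
Proof.
exists (gS (existT _ 0 x0)); apply: final_lat.
- move=> A B IA IB.
  have pA : pidS A := proj1 (bridge (@leEL P0 j0 H0 m0 G0) A) IA.
  have pB : pidS B := proj1 (bridge (@leEL P0 j0 H0 m0 G0) B) IB.
  rewrite leEL; exact: gS_emb.
- move=> A B IA IB.
  have pA : pidS A := proj1 (bridge (@leEL P0 j0 H0 m0 G0) A) IA.
  have pB : pidS B := proj1 (bridge (@leEL P0 j0 H0 m0 G0) B) IB.
  have [C [pC eC]] := img_op (existT _ 0 x0) (@lexJ_tag P0 (fun k => proj1_sig (jat H0 k))) pA pB.
  exists C; split=> //; exact: (proj2 (bridge (@leEL P0 j0 H0 m0 G0) C) pC).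
- move=> A B IA IB.
  have pA : pidS A := proj1 (bridge (@leEL P0 j0 H0 m0 G0) A) IA.
  have pB : pidS B := proj1 (bridge (@leEL P0 j0 H0 m0 G0) B) IB.
  have [C [pC eC]] := img_op (existT _ 0 x0) (@lexM_tag P0 (fun k => proj1_sig (mat G0 k))) pA pB.
  exists C; split=> //; exact: (proj2 (bridge (@leEL P0 j0 H0 m0 G0) C) pC).
Qed.

Lemma le_anti' d (P : porderType d) (x y : P) : x <= y -> y <= x -> x = y.
Proof. by move=> h1 h2; apply: le_anti; rewrite h1 h2. Qed.

Definition posOf d (P : porderType d) : pos :=
  @Pos P (fun x y => x <= y) (fun x => le_refl x) (fun x y z h1 h2 => le_trans h1 h2)
    (@le_anti' d P).

Definition unitpos : pos.
Proof.
refine (@Pos unit (fun _ _ => True) _ _ _) => //.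
by move=> [] [].
Defined.

Lemma lub_of d (S : joinSemilatticeType d) : islub (P := posOf S) (fun x y => x `|` y).
Proof. by move=> x y z /=; rewrite leUx; split=> [/andP|[-> ->]]. Qed.
Lemma glb_of d (L : latticeType d) : isglb (P := posOf L) (fun x y => x `&` y).
Proof. by move=> x y z /=; rewrite lexI; split=> [/andP|[-> ->]]. Qed.
Arguments lub_of {d} S.
Arguments glb_of {d} L.
Lemma lub_unit : islub (P := unitpos) (fun _ _ => tt).
Proof. by []. Qed.
Lemma glb_unit : isglb (P := unitpos) (fun _ _ => tt).
Proof. by []. Qed.

Theorem proposition2p2 :
  (forall (d : Order.disp_t) (L : latticeType d),
     exists (d' : Order.disp_t) (L' : latticeType d'),
       (exists f : L -> L', lattice_embedding f) /\
       (exists g : (L' -> Prop) -> L', ideals_lattice_embedding g)) /\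
  (forall (d : Order.disp_t) (S : joinSemilatticeType d),
     exists (d' : Order.disp_t) (S' : joinSemilatticeType d'),
       (exists f : S -> S', semilattice_embedding f) /\
       (exists g : (S' -> Prop) -> S', ideals_semilattice_embedding g)) /\
  (forall (d : Order.disp_t) (P : porderType d),
     exists (d' : Order.disp_t) (P' : porderType d'),
       (exists f : P -> P', poset_embedding f) /\
       (exists g : (P' -> Prop) -> P', ideals_poset_embedding g)).
Proof.
split; [|split].
- move=> d L; case: (pselect (inhabited L)) => [[x0]|NL].
  + exists (Order.Disp tt tt), (SigL (lub_of L) (glb_of L)); split; last first.
      exact: (@construct_lat (posOf L) _ (lub_of L) _ (glb_of L) x0).
    exists (fun x : L => existT (fun k => car (lev (posOf L) k)) 0 x : SigL (lub_of L) (glb_of L)).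
    split.
    * by move=> x y e; exact: (Eqdep_dec.inj_pair2_eq_dec _ PeanoNat.Nat.eq_dec _ _ _ _ e).
    * by move=> x y; symmetry; exact: lexM_same.
    * by move=> x y; symmetry; exact: lexJ_same.
  + exists (Order.Disp tt tt), (SigL lub_unit glb_unit); split; last first.
      exact: (@construct_lat unitpos _ lub_unit _ glb_unit tt).
    exists (fun x : L => False_rect (SigL lub_unit glb_unit) (NL (inhabits x))).
    by split=> x; case: (NL (inhabits x)).
- move=> d L; case: (pselect (inhabited L)) => [[x0]|NL].
  + exists (Order.Disp tt tt), (SigJ (lub_of L)); split; last first.
      exact: (@construct_sl (posOf L) _ (lub_of L) x0).
    exists (fun x : L => existT (fun k => car (lev (posOf L) k)) 0 x : SigJ (lub_of L)).
    split.
    * by move=> x y e; exact: (Eqdep_dec.inj_pair2_eq_dec _ PeanoNat.Nat.eq_dec _ _ _ _ e).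
    * by move=> x y; symmetry; exact: lexJ_same.
  + exists (Order.Disp tt tt), (SigJ lub_unit); split; last first.
      exact: (@construct_sl unitpos _ lub_unit tt).
    exists (fun x : L => False_rect (SigJ lub_unit) (NL (inhabits x))).
    by split=> x; case: (NL (inhabits x)).
- move=> d L; case: (pselect (inhabited L)) => [[x0]|NL].
  + exists (Order.Disp tt tt), (SigP (posOf L)); split; last first.
      exact: (@construct_pos (posOf L) x0).
    exists (fun x : L => existT (fun k => car (lev (posOf L) k)) 0 x : SigP (posOf L)).
    move=> x y; apply/idP/idP.
    * by move/leEP/leS_same.
    * by move=> h; apply/leEP/leS_same.
  + exists (Order.Disp tt tt), (SigP unitpos); split; last first.
      exact: (@construct_pos unitpos tt).
    exists (fun x : L => False_rect (SigP unitpos) (NL (inhabits x))).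
    by move=> x; case: (NL (inhabits x)).
Qed.
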